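(* Let $\mathcal W,\mathcal U,\mathcal V$ be finite, $\Phi_W$ a pmf, $\Phi_{U|W}$ a codebook distribution and $\Phi_{V|W,U}$ a channel. Consider the $n$-fold memoryless setting: source $W^n\sim\prod\Phi_W$, random codebook $\{U^n(w^n)\}_{w^n\in\mathcal W^n}$ with independent entries $U^n(w^n)\sim\prod_t\Phi_{U|W}(\cdot|w_t)$, induced output $P_{V^n}(v^n)=\sum_{w^n}\prod_t\Phi_W(w_t)\Phi_{V|W,U}(v_t|w_t,U_t(w^n))$, and $Q_{V^n}=\prod\Phi_V$. If $H_\Phi(W)>I_\Phi(W,U;V)$, then $\mathbf E\|P_{V^n}-Q_{V^n}\|_{TV}\le\frac32\,2^{-\gamma n}$ for all $n$, where $\gamma>0$ is $$\gamma=\max_{\beta,\beta'\ge0,(\beta,\beta')\ne(0,0)}\ \frac{-\beta'}{2\beta+\beta'}\log\mathbf E_\Phi Z^\beta+\frac{-\beta}{2\beta+\beta'}\log\Big(\mathbf E_{\Phi_V}\sqrt{\mathbf E_{\Phi_{W,U|V}}Z^{1-\beta'}}\Big)^2,\qquad Z=\Phi_W(W)\frac{\Phi_{V|W,U}(V|W,U)}{\Phi_V(V)}.$$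
   Context: Expectations $\mathbf E_\Phi$ are under the single-letter joint $\Phi_W\Phi_{U|W}\Phi_{V|W,U}$; the inner expectation in $\mathbf E_{\Phi_V}\sqrt{\mathbf E_{\Phi_{W,U|V}}(\cdot)}$ is over $(W,U)$ given $V$. All logarithms base 2. Expectation on the left is over the random codebook; total variation is half the $\ell_1$ distance. *)

(* Defs.v *)
From mathcomp Require Import all_boot.
From Stdlib Require Import Reals.

Set Implicit Arguments.
Unset Strict Implicit.
Unset Printing Implicit Defensive.

Local Open Scope R_scope.

Definition rsum (T : finType) (f : T -> R) : R := \big[Rplus/0]_(i : T) f i.
Definition rprod (T : finType) (f : T -> R) : R := \big[Rmult/1]_(i : T) f i.

Definition log2 (x : R) : R := ln x / ln 2.

Definition is_pmf (T : finType) (p : T -> R) : Prop :=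
  (forall x, 0 <= p x) /\ rsum p = 1.

Section Info.
Variables (W U V : finType).
Variables (PhiW : W -> R) (PhiUW : W -> U -> R) (PhiVWU : W -> U -> V -> R).

Definition joint (w : W) (u : U) (v : V) : R := PhiW w * PhiUW w u * PhiVWU w u v.

Definition PhiV (v : V) : R := rsum (fun w => rsum (fun u => joint w u v)).

(* entropy H_Phi(W) in bits, with 0 log 0 = 0 *)
Definition entropyW : R := - rsum (fun w => PhiW w * log2 (PhiW w)).

(* mutual information I_Phi(W,U;V) in bits (terms of zero mass vanish) *)
Definition mutinfo : R :=
  rsum (fun w => rsum (fun u => rsum (fun v =>
    joint w u v * log2 (PhiVWU w u v / PhiV v)))).

Definition Zrv (w : W) (u : U) (v : V) : R := PhiW w * PhiVWU w u v / PhiV v.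

(* E_Phi Z^b  (Z > 0 wherever the joint mass is positive) *)
Definition EZpow (b : R) : R :=
  rsum (fun w => rsum (fun u => rsum (fun v => joint w u v * Rpower (Zrv w u v) b))).

Definition EVsqrt (b : R) : R :=
  rsum (fun v => PhiV v *
    sqrt (rsum (fun w => rsum (fun u => joint w u v / PhiV v * Rpower (Zrv w u v) b)))).

Definition gamma_exp (b b' : R) : R :=
  (- b' / (2 * b + b')) * log2 (EZpow b)
  + (- b / (2 * b + b')) * log2 ((EVsqrt (1 - b')) ^ 2).

Variable n : nat.

Definition seqW := {ffun 'I_n -> W}.
Definition seqU := {ffun 'I_n -> U}.
Definition seqV := {ffun 'I_n -> V}.

Definition codebook := {ffun seqW -> seqU}.

Definition codebook_prob (c : codebook) : R :=
  rprod (fun wn : seqW => rprod (fun t : 'I_n => PhiUW (wn t) (c wn t))).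

Definition PVn (c : codebook) (vn : seqV) : R :=
  rsum (fun wn : seqW => rprod (fun t : 'I_n =>
    PhiW (wn t) * PhiVWU (wn t) (c wn t) (vn t))).

Definition QVn (vn : seqV) : R := rprod (fun t : 'I_n => PhiV (vn t)).

Definition tv_dist (P Q : seqV -> R) : R := / 2 * rsum (fun vn => Rabs (P vn - Q vn)).

Definition expected_tv : R :=
  rsum (fun c : codebook => codebook_prob c * tv_dist (PVn c) QVn).

End Info.

(* Main.v *)
Require Import Defs.
From HB Require Import structures.
From mathcomp Require Import all_boot.
From Stdlib Require Import Reals Lra Classical.
Local Open Scope R_scope.

Module A.
Set Implicit Arguments.
Unset Strict Implicit.
Local Open Scope R_scope.


Lemma Rplus_assoc' : associative Rplus. Proof. by move=> *; rewrite Rplus_assoc. Qed.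
Lemma Rmult_assoc' : associative Rmult. Proof. by move=> *; rewrite Rmult_assoc. Qed.
HB.instance Definition _ := Monoid.isComLaw.Build R 0 Rplus Rplus_assoc' Rplus_comm Rplus_0_l.
HB.instance Definition _ := Monoid.isComLaw.Build R 1 Rmult Rmult_assoc' Rmult_comm Rmult_1_l.
HB.instance Definition _ := Monoid.isMulLaw.Build R 0 Rmult Rmult_0_l Rmult_0_r.
HB.instance Definition _ := Monoid.isAddLaw.Build R Rmult Rplus Rmult_plus_distr_r Rmult_plus_distr_l.

Section Sums.
Variable T : finType.
Implicit Types f g : T -> R.

Lemma rsum_split f g : rsum (fun i => f i + g i) = rsum f + rsum g.
Proof. exact: big_split. Qed.
Lemma rprod_split f g : rprod (fun i => f i * g i) = rprod f * rprod g.
Proof. exact: big_split. Qed.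
Lemma rsum_ext f g : (forall i, f i = g i) -> rsum f = rsum g.
Proof. by move=> H; apply: eq_bigr => i _; apply: H. Qed.
Lemma rprod_ext f g : (forall i, f i = g i) -> rprod f = rprod g.
Proof. by move=> H; apply: eq_bigr => i _; apply: H. Qed.
Lemma rsum_scal c f : rsum (fun i => c * f i) = c * rsum f.
Proof. by rewrite /rsum big_distrr. Qed.
Lemma rsum_scalr c f : rsum (fun i => f i * c) = rsum f * c.
Proof. by rewrite /rsum big_distrl. Qed.
Lemma rsum_le f g : (forall i, f i <= g i) -> rsum f <= rsum g.
Proof.
move=> H; rewrite /rsum; apply: (big_ind2 (fun x y => x <= y)) => //.
- lra.
- by move=> ? ? ? ? ? ?; lra.
Qed.
Lemma rsum_ge0 f : (forall i, 0 <= f i) -> 0 <= rsum f.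
Proof. move=> H; rewrite /rsum; apply: big_ind => //; [lra| move=> *; lra]. Qed.
Lemma rprod_ge0 f : (forall i, 0 <= f i) -> 0 <= rprod f.
Proof. move=> H; rewrite /rprod; apply: big_ind => //; [lra| move=> *; exact: Rmult_le_pos]. Qed.
Lemma rprod_gt0 f : (forall i, 0 < f i) -> 0 < rprod f.
Proof. move=> H; rewrite /rprod; apply: big_ind => //; [lra| move=> *; exact: Rmult_lt_0_compat]. Qed.
Lemma rsum_gt0 f : (forall i, 0 <= f i) -> (exists i, 0 < f i) -> 0 < rsum f.
Proof.
move=> H [i Hi]; rewrite /rsum (bigD1 i) //=.
have : 0 <= \big[Rplus/0]_(j | j != i) f j.
  by apply: big_ind => //; [lra | move=> *; lra].
simpl; lra.
Qed.
Lemma rprod_zero f i : f i = 0 -> rprod f = 0.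
Proof. by move=> H; rewrite /rprod (bigD1 i) //= H Rmult_0_l. Qed.
Lemma rsum_pos_ex f : rsum f = 1 -> exists i, f i <> 0.
Proof.
move=> H; apply: NNPP => Hn.
have: rsum f = 0.
  rewrite /rsum big1 // => i _; apply: NNPP => Hi; apply: Hn; by exists i.
lra.
Qed.
End Sums.

Lemma rsum_exch (T1 T2 : finType) (F : T1 -> T2 -> R) :
  rsum (fun i => rsum (fun j => F i j)) = rsum (fun j => rsum (fun i => F i j)).
Proof. exact: exchange_big. Qed.

Lemma rprod_const n c : rprod (fun _ : 'I_n => c) = c ^ n.
Proof. rewrite /rprod big_const_ord; elim: n => //= n ->; done. Qed.

Lemma prod_sum (I X : finType) (F : I -> X -> R) :
  rsum (fun f : {ffun I -> X} => rprod (fun t => F t (f t))) =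
  rprod (fun t => rsum (fun x => F t x)).
Proof. by rewrite /rsum /rprod bigA_distr_bigA. Qed.

Lemma rprod_pick1 (I : finType) (a : I) (x : I -> R) :
  rprod (fun i => if i == a then x i else 1) = x a.
Proof.
rewrite /rprod (bigD1 a) //= eqxx big1 ?Rmult_1_r // => i /negbTE ->; done.
Qed.

Lemma rprod_pick2 (I : finType) (a b : I) (x y : I -> R) : a != b ->
  rprod (fun i => if i == a then x i else if i == b then y i else 1) = x a * y b.
Proof.
move=> ab; rewrite /rprod (bigD1 a) //= eqxx (bigD1 b) //=; last by rewrite eq_sym.
rewrite (negbTE (b:=b == a)) ?eqxx; last by rewrite eq_sym.
rewrite big1 ?Rmult_1_r // => i /andP [/negbTE -> /negbTE ->]; done.
Qed.

Lemma jensen (C : finType) (p X : C -> R) : (forall c, 0 <= p c) -> rsum p = 1 ->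
  rsum (fun c => p c * Rabs (X c)) <= sqrt (rsum (fun c => p c * (X c * X c))).
Proof.
move=> p0 p1; set m := rsum _.
have m0 : 0 <= m by apply: rsum_ge0 => c; apply: Rmult_le_pos => //; apply: Rabs_pos.
have H : 0 <= rsum (fun c => p c * ((Rabs (X c) - m) * (Rabs (X c) - m))).
  apply: rsum_ge0 => c; apply: Rmult_le_pos => //; apply: Rle_0_sqr.
have E : rsum (fun c => p c * ((Rabs (X c) - m) * (Rabs (X c) - m))) =
   rsum (fun c => p c * (X c * X c)) - 2 * m * m + m * m * rsum p.
  transitivity (rsum (fun c => p c * (X c * X c) + (-2 * m) * (p c * Rabs (X c)) + (m * m) * p c)).
    apply: rsum_ext => c.
    have : Rabs (X c) * Rabs (X c) = X c * X c.
      by rewrite -Rabs_mult Rabs_right //; apply: Rle_ge; apply: Rle_0_sqr.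
    move=> HH; rewrite -HH; ring.
  rewrite !rsum_split !rsum_scal -/m; ring.
rewrite p1 in E.
rewrite -(sqrt_square m) //; apply: sqrt_le_1_alt; nra.
Qed.
Arguments prod_sum {I X} F.

End A.
Import A.

Module B.
Local Open Scope R_scope.


Section Code.
Variables (W U V : finType).
Variables (PhiW : W -> R) (PhiUW : W -> U -> R) (PhiVWU : W -> U -> V -> R).
Variable n : nat.
Hypothesis HUW : forall w, is_pmf (PhiUW w).

Definition pU (wn : seqW W n) (un : seqU U n) := rprod (fun t => PhiUW (wn t) (un t)).
Definition cp (c : codebook W U n) := codebook_prob PhiUW c.

Lemma pU_ge0 wn un : 0 <= pU wn un.
Proof. apply: rprod_ge0 => t; exact: (proj1 (HUW _)). Qed.

Lemma pU_sum wn : rsum (pU wn) = 1.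
Proof.
rewrite /pU (prod_sum (fun t x => PhiUW (wn t) x)).
rewrite (rprod_ext (g := fun _ => 1)) ?rprod_const ?pow1 // => t; exact: (proj2 (HUW _)).
Qed.

Lemma cp_ge0 c : 0 <= cp c.
Proof. apply: rprod_ge0 => wn; exact: pU_ge0. Qed.

Lemma Ecode (F : seqW W n -> seqU U n -> R) :
  rsum (fun c => cp c * rprod (fun wn => F wn (c wn))) =
  rprod (fun wn => rsum (fun un => pU wn un * F wn un)).
Proof.
rewrite -(prod_sum (fun wn un => pU wn un * F wn un)); apply: rsum_ext => c.
by rewrite rprod_split.
Qed.

Lemma cp_sum : rsum cp = 1.
Proof.
transitivity (rsum (fun c => cp c * rprod (fun wn => (fun _ _ => 1) wn (c wn)))).
  apply: rsum_ext => c; rewrite [rprod _]big1 ?Rmult_1_r //.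
rewrite (Ecode (fun _ _ => 1)) (rprod_ext (g := fun _ => 1)); first exact: big1.
by move=> wn; rewrite (rsum_ext (g := pU wn)) ?pU_sum // => un; ring.
Qed.

Lemma Esingle a (g : seqU U n -> R) :
  rsum (fun c => cp c * g (c a)) = rsum (fun u => pU a u * g u).
Proof.
transitivity (rsum (fun c => cp c * rprod (fun wn => (fun wn u => if wn == a then g u else 1) wn (c wn)))).
  by apply: rsum_ext => c; rewrite (rprod_pick1 a (fun wn => g (c wn))).
rewrite (Ecode (fun wn u => if wn == a then g u else 1)).
rewrite (rprod_ext (g := fun wn => if wn == a then rsum (fun u => pU a u * g u) else 1)).
  by rewrite (rprod_pick1 a (fun _ => rsum (fun u => pU a u * g u))).
move=> wn /=; case: eqP => [->|_] //.
by rewrite (rsum_ext (g := pU wn)) ?pU_sum // => un; ring.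
Qed.

Lemma Epair a b (g h : seqU U n -> R) : a != b ->
  rsum (fun c => cp c * (g (c a) * h (c b))) =
  rsum (fun u => pU a u * g u) * rsum (fun u => pU b u * h u).
Proof.
move=> ab.
transitivity (rsum (fun c => cp c * rprod (fun wn =>
   (fun wn u => if wn == a then g u else if wn == b then h u else 1) wn (c wn)))).
  by apply: rsum_ext => c; rewrite (rprod_pick2 (fun wn => g (c wn)) (fun wn => h (c wn))).
rewrite (Ecode (fun wn u => if wn == a then g u else if wn == b then h u else 1)).
rewrite (rprod_ext (g := fun wn => if wn == a then rsum (fun u => pU a u * g u)
    else if wn == b then rsum (fun u => pU b u * h u) else 1)).
  by rewrite (rprod_pick2 (fun _ => rsum (fun u => pU a u * g u)) (fun _ => rsum (fun u => pU b u * h u))).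
move=> wn /=; case: eqP => [->|_] //; case: eqP => [->|_] //.
by rewrite (rsum_ext (g := pU wn)) ?pU_sum // => un; ring.
Qed.

Lemma var_bound (f : seqW W n -> seqU U n -> R) :
  let m := fun wn => rsum (fun u => pU wn u * f wn u) in
  rsum (fun c => cp c * ((rsum (fun wn => f wn (c wn)) - rsum m) *
                         (rsum (fun wn => f wn (c wn)) - rsum m)))
  <= rsum (fun wn => rsum (fun u => pU wn u * (f wn u * f wn u))).
Proof.
move=> m.
set d := fun wn u => f wn u - m wn.
have Ed : forall a, rsum (fun u => pU a u * d a u) = 0.
  move=> a; rewrite /d.
  rewrite (rsum_ext (g := fun u => pU a u * f a u + (- m a) * pU a u)); last by move=> u; ring.
  by rewrite rsum_split rsum_scal pU_sum /m; ring.
have E1 : forall c, rsum (fun wn => f wn (c wn)) - rsum m = rsum (fun wn => d wn (c wn)).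
  move=> c; rewrite /d /Rminus.
  rewrite (rsum_ext (f := fun wn => f wn (c wn) + - m wn) (g := fun wn => f wn (c wn) + (-1) * m wn)); last by move=> *; ring.
  rewrite rsum_split rsum_scal; ring.
have E2 : forall c, cp c * (rsum (fun wn => d wn (c wn)) * rsum (fun wn => d wn (c wn))) =
    rsum (fun a => rsum (fun b => cp c * (d a (c a) * d b (c b)))).
  move=> c; rewrite -rsum_scalr -rsum_scal; apply: rsum_ext => a.
  by rewrite -!rsum_scal; apply: rsum_ext => b.
rewrite (rsum_ext (g := fun c => rsum (fun a => rsum (fun b => cp c * (d a (c a) * d b (c b)))))); last first.
  by move=> c; rewrite E1 E2.
rewrite (rsum_exch (fun c a => rsum (fun b => cp c * (d a (c a) * d b (c b))))).
apply: rsum_le => a.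
rewrite (rsum_exch (fun c b => cp c * (d a (c a) * d b (c b)))).
rewrite {1}/rsum (bigD1 a) //= [X in _ + X <= _]big1 ?Rplus_0_r; last first.
  move=> b ba; rewrite (Epair a b (fun u => d a u) (fun u => d b u)); last by rewrite eq_sym.
  by rewrite Ed; ring.
rewrite -/(rsum _) (Esingle a (fun u => d a u * d a u)).
have -> : rsum (fun u => pU a u * (d a u * d a u)) =
   rsum (fun u => pU a u * (f a u * f a u)) - m a * m a.
  rewrite /d.
  rewrite (rsum_ext (g := fun u => pU a u * (f a u * f a u) + (-2 * m a) * (pU a u * f a u) + (m a * m a) * pU a u)); last by move=> u; ring.
  rewrite !rsum_split !rsum_scal pU_sum /m; ring.
have H : 0 <= m a * m a by apply: Rle_0_sqr.
rewrite /Rminus -[X in _ <= X]Rplus_0_r; apply: Rplus_le_compat_l; lra.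
Qed.
End Code.

End B.
Import B.

Module C.
Set Implicit Arguments.
Unset Strict Implicit.
Local Open Scope R_scope.


Lemma rsum_ge_term (T : finType) (f : T -> R) i : (forall j, 0 <= f j) -> f i <= rsum f.
Proof.
move=> H; rewrite /rsum (bigD1 i) //=.
have : 0 <= \big[Rplus/0]_(j | j != i) f j by apply: big_ind => //; [lra | move=> *; lra].
lra.
Qed.

Lemma sqrt_rprod (T : finType) (f : T -> R) : (forall i, 0 <= f i) ->
  sqrt (rprod f) = rprod (fun i => sqrt (f i)).
Proof.
move=> H; rewrite /rprod.
suff: 0 <= \big[Rmult/1]_i f i /\ sqrt (\big[Rmult/1]_i f i) = \big[Rmult/1]_i sqrt (f i) by case.
apply: (big_ind2 (fun x y => 0 <= x /\ sqrt x = y)).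

- split; [lra | exact: sqrt_1].
- move=> x1 x2 y1 y2 [h1 <-] [h2 <-]; split; first exact: Rmult_le_pos.
  exact: sqrt_mult.
- by move=> i _; split.
Qed.

Lemma rprod_Rpower (T : finType) (f : T -> R) b : (forall i, 0 < f i) ->
  0 < rprod f /\ rprod (fun i => Rpower (f i) b) = Rpower (rprod f) b.
Proof.
move=> H; rewrite /rprod.
suff: 0 < \big[Rmult/1]_i f i /\ \big[Rmult/1]_i Rpower (f i) b = Rpower (\big[Rmult/1]_i f i) b by case.
apply: (big_ind2 (fun y x => 0 < x /\ y = Rpower x b)).
- split; [lra | by rewrite /Rpower ln_1 Rmult_0_r exp_0].
- move=> x1 x2 y1 y2 [h1 ->] [h2 ->]; split; first exact: Rmult_lt_0_compat.
  exact: Rpower_mult_distr.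
- by move=> i _; split.
Qed.

Lemma Rpower_pos x b : 0 < Rpower x b.
Proof. exact: exp_pos. Qed.

Section Main.
Variables (W U V : finType).
Variables (PhiW : W -> R) (PhiUW : W -> U -> R) (PhiVWU : W -> U -> V -> R).
Variable n : nat.
Hypothesis HW : is_pmf PhiW.
Hypothesis HUW : forall w, is_pmf (PhiUW w).
Hypothesis HVWU : forall w u, is_pmf (PhiVWU w u).

Local Notation PV := (PhiV PhiW PhiUW PhiVWU).
Local Notation jnt := (joint PhiW PhiUW PhiVWU).
Local Notation Zr := (Zrv PhiW PhiUW PhiVWU).
Local Notation pU := (pU W U PhiUW n).
Local Notation cp := (cp W U PhiUW n).

Lemma jnt_ge0 w u v : 0 <= jnt w u v.
Proof.
rewrite /joint; apply: Rmult_le_pos; [apply: Rmult_le_pos|].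
- exact: (proj1 HW).
- exact: (proj1 (HUW _)).
- exact: (proj1 (HVWU _ _)).
Qed.

Lemma PV_ge w u v : jnt w u v <= PV v.
Proof.
rewrite /PhiV.
apply: (Rle_trans _ (rsum (fun u => jnt w u v))).
  apply: (@rsum_ge_term _ (fun u => jnt w u v) u) => j; exact: jnt_ge0.
apply: (@rsum_ge_term _ (fun w => rsum (fun u => jnt w u v)) w) => j.
apply: rsum_ge0 => k; exact: jnt_ge0.
Qed.

Lemma PV_ge0 v : 0 <= PV v.
Proof. apply: rsum_ge0 => w; apply: rsum_ge0 => u; exact: jnt_ge0. Qed.

Definition Tn (wn : seqW W n) (un : seqU U n) (vn : seqV V n) :=
  rprod (fun t => PhiW (wn t) * PhiVWU (wn t) (un t) (vn t)).
Definition Jn (wn : seqW W n) (un : seqU U n) (vn : seqV V n) :=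
  rprod (fun t => jnt (wn t) (un t) (vn t)).
Definition Zn (wn : seqW W n) (un : seqU U n) (vn : seqV V n) :=
  rprod (fun t => Zr (wn t) (un t) (vn t)).
Definition Qn (vn : seqV V n) := rprod (fun t => PV (vn t)).

Lemma Jn_ge0 wn un vn : 0 <= Jn wn un vn.
Proof. apply: rprod_ge0 => t; exact: jnt_ge0. Qed.

Lemma Tn_ge0 wn un vn : 0 <= Tn wn un vn.
Proof. apply: rprod_ge0 => t; apply: Rmult_le_pos; [exact: (proj1 HW)|exact: (proj1 (HVWU _ _))]. Qed.

Lemma pUT wn un vn : pU wn un * Tn wn un vn = Jn wn un vn.
Proof. rewrite /pU /Tn /Jn -rprod_split; apply: rprod_ext => t; rewrite /joint; ring. Qed.

Lemma tens1 (H : 'I_n -> V -> R) :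
  rsum (fun vn : seqV V n => rprod (fun t => H t (vn t))) = rprod (fun t => rsum (H t)).
Proof. exact: prod_sum. Qed.

Lemma tens2 (G : 'I_n -> W -> U -> R) :
  rsum (fun wn : seqW W n => rsum (fun un : seqU U n => rprod (fun t => G t (wn t) (un t)))) =
  rprod (fun t => rsum (fun w => rsum (fun u => G t w u))).
Proof.
rewrite -(prod_sum (fun t w => rsum (fun u => G t w u))); apply: rsum_ext => wn.
exact: (prod_sum (fun t u => G t (wn t) u)).
Qed.

Lemma sumJn vn : rsum (fun wn => rsum (fun un => Jn wn un vn)) = Qn vn.
Proof. exact: (tens2 (fun t w u => jnt w u (vn t))). Qed.

Definition Pos (wn : seqW W n) (un : seqU U n) (vn : seqV V n) := forall t, 0 < jnt (wn t) (un t) (vn t).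

Lemma notPos wn un vn : ~ Pos wn un vn -> Jn wn un vn = 0.
Proof.
move=> H; apply: NNPP => H2; apply: H => t; apply: NNPP => Ht.
apply: H2; apply: (rprod_zero (i := t)).
have := jnt_ge0 (wn t) (un t) (vn t); lra.
Qed.

Lemma Pos_facts wn un vn : Pos wn un vn ->
  0 < Zn wn un vn /\ 0 < Qn vn /\ Tn wn un vn = Qn vn * Zn wn un vn /\
  (forall b, rprod (fun t => Rpower (Zr (wn t) (un t) (vn t)) b) = Rpower (Zn wn un vn) b).
Proof.
move=> H.
have HPV : forall t, 0 < PV (vn t).
  move=> t; apply: Rlt_le_trans (H t) (PV_ge _ _ _).
have Hj : forall t, 0 < PhiW (wn t) /\ 0 < PhiVWU (wn t) (un t) (vn t).
  move=> t; have := H t; rewrite /joint => h.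
  have h1 := proj1 HW (wn t); have h2 := proj1 (HUW (wn t)) (un t);
  have h3 := proj1 (HVWU (wn t) (un t)) (vn t).
  split.
  - case: (Rle_lt_or_eq_dec _ _ h1) => // e; rewrite -e in h; lra.
  - case: (Rle_lt_or_eq_dec _ _ h3) => // e; rewrite -e in h; lra.
have HZ : forall t, 0 < Zr (wn t) (un t) (vn t).
  move=> t; rewrite /Zrv; case: (Hj t) => a b.
  apply: Rmult_lt_0_compat; [exact: Rmult_lt_0_compat| exact: Rinv_0_lt_compat].
split; first exact: (proj1 (rprod_Rpower 0 HZ)).
split; first exact: rprod_gt0.
split; last by move=> b; exact: (proj2 (rprod_Rpower b HZ)).
rewrite /Qn /Zn -rprod_split; apply: rprod_ext => t; rewrite /Zrv.
field; have := HPV t; lra.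
Qed.

Definition ind (tau : R) wn un vn := if Rle_dec (Zn wn un vn) tau then 1 else 0.
Definition f1 tau vn wn un := Tn wn un vn * ind tau wn un vn.
Definition f2 tau vn wn un := Tn wn un vn * (1 - ind tau wn un vn).

Lemma term2 tau b wn un vn : 0 < tau -> 0 <= b ->
  pU wn un * f2 tau vn wn un <=
  Jn wn un vn * rprod (fun t => Rpower (Zr (wn t) (un t) (vn t)) b) * Rpower tau (- b).
Proof.
move=> ht hb.
have R0 : 0 <= Jn wn un vn * rprod (fun t => Rpower (Zr (wn t) (un t) (vn t)) b) * Rpower tau (- b).
  apply: Rmult_le_pos; [apply: Rmult_le_pos|].
  - exact: Jn_ge0.
  - apply: rprod_ge0 => t; apply: Rlt_le; exact: Rpower_pos.
  - apply: Rlt_le; exact: Rpower_pos.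
rewrite /f2 -Rmult_assoc pUT /ind; case: Rle_dec => hz.
  by rewrite Rminus_diag Rmult_0_r.
rewrite Rminus_0_r Rmult_1_r.
case: (classic (Pos wn un vn)) => hp; last by rewrite {1}(notPos hp).
have [Z0 [_ [_ HR]]] := Pos_facts hp.
rewrite HR Rmult_assoc.
rewrite -{1}(Rmult_1_r (Jn wn un vn)); apply: Rmult_le_compat_l; first exact: Jn_ge0.
rewrite Rpower_Ropp.
have h1 : Rpower tau b <= Rpower (Zn wn un vn) b.
  apply: Rle_Rpower_l => //; split => //; lra.
have h2 := Rpower_pos tau b.
apply: (Rmult_le_reg_r (Rpower tau b)) => //.
rewrite Rmult_assoc Rinv_l; lra.
Qed.

Lemma term1 tau b wn un vn : 0 < tau -> 0 <= b ->
  pU wn un * (f1 tau vn wn un * f1 tau vn wn un) <=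
  Jn wn un vn * Qn vn * rprod (fun t => Rpower (Zr (wn t) (un t) (vn t)) (1 - b)) * Rpower tau b.
Proof.
move=> ht hb.
have R0 : 0 <= Jn wn un vn * Qn vn * rprod (fun t => Rpower (Zr (wn t) (un t) (vn t)) (1 - b)) * Rpower tau b.
  apply: Rmult_le_pos; [apply: Rmult_le_pos; first apply: Rmult_le_pos|].
  - exact: Jn_ge0.
  - apply: rprod_ge0 => t; exact: PV_ge0.
  - apply: rprod_ge0 => t; apply: Rlt_le; exact: Rpower_pos.
  - apply: Rlt_le; exact: Rpower_pos.
have -> : pU wn un * (f1 tau vn wn un * f1 tau vn wn un) =
   (pU wn un * Tn wn un vn) * Tn wn un vn * (ind tau wn un vn * ind tau wn un vn).
  rewrite /f1; ring.
rewrite pUT /ind; case: Rle_dec => hz; last by rewrite Rmult_0_r Rmult_0_r.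
rewrite Rmult_1_r Rmult_1_r.
case: (classic (Pos wn un vn)) => hp; last by rewrite {1}(notPos hp) !Rmult_0_l.
have [Z0 [Q0 [HT HR]]] := Pos_facts hp.
rewrite HR HT -!Rmult_assoc Rmult_assoc [X in _ <= X]Rmult_assoc -Rmult_assoc.
apply: Rmult_le_compat_l.
  apply: Rmult_le_pos; [exact: Jn_ge0| lra].
have EZ : Zn wn un vn = Rpower (Zn wn un vn) ((1 - b) + b).
  by rewrite (_ : (1 - b) + b = 1) ?Rpower_1 //; ring.
rewrite {1}EZ Rpower_plus.
apply: Rmult_le_compat_l; first by apply: Rlt_le; exact: Rpower_pos.
apply: Rle_Rpower_l => //; split => //.
Qed.

Lemma Evn tau vn : 0 < tau ->
  rsum (fun c => cp c * Rabs (PVn PhiW PhiVWU c vn - QVn PhiW PhiUW PhiVWU vn)) <=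
  sqrt (rsum (fun wn => rsum (fun un => pU wn un * (f1 tau vn wn un * f1 tau vn wn un)))) +
  2 * rsum (fun wn => rsum (fun un => pU wn un * f2 tau vn wn un)).
Proof.
move=> ht.
set M2 := rsum (fun wn => rsum (fun un => pU wn un * f2 tau vn wn un)).
set m := fun wn => rsum (fun un => pU wn un * f1 tau vn wn un).
set P1 := fun c : codebook W U n => rsum (fun wn => f1 tau vn wn (c wn)).
set P2 := fun c : codebook W U n => rsum (fun wn => f2 tau vn wn (c wn)).
have HP : forall c, PVn PhiW PhiVWU c vn = P1 c + P2 c.
  move=> c; transitivity (rsum (fun wn => Tn wn (c wn) vn)); first by [].
  rewrite /P1 /P2 -rsum_split; apply: rsum_ext => wn.
  rewrite /f1 /f2; ring.
have HQ : QVn PhiW PhiUW PhiVWU vn = rsum m + M2.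
  transitivity (Qn vn); first by [].
  rewrite /m /M2 -rsum_split -(sumJn vn); apply: rsum_ext => wn.
  rewrite -rsum_split; apply: rsum_ext => un.
  rewrite -pUT /f1 /f2; ring.
have P2ge : forall c, 0 <= P2 c.
  move=> c; apply: rsum_ge0 => wn; rewrite /f2; apply: Rmult_le_pos; first exact: Tn_ge0.
  rewrite /ind; case: Rle_dec => ? /=; lra.
have M2ge : 0 <= M2.
  apply: rsum_ge0 => wn; apply: rsum_ge0 => un; rewrite /f2; apply: Rmult_le_pos; first exact: (@pU_ge0 W U PhiUW n HUW).
  apply: Rmult_le_pos; first exact: Tn_ge0.
  rewrite /ind; case: Rle_dec => ? /=; lra.
have EP2 : rsum (fun c => cp c * P2 c) = M2.
  rewrite /P2 (rsum_ext (g := fun c => rsum (fun wn => cp c * f2 tau vn wn (c wn)))); last first.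
    by move=> c; rewrite rsum_scal.
  rewrite rsum_exch; apply: rsum_ext => wn.
  exact: (@Esingle W U PhiUW n HUW wn (f2 tau vn wn)).
apply: (Rle_trans _ (rsum (fun c => cp c * Rabs (P1 c - rsum m) + cp c * P2 c + M2 * cp c))).
  apply: rsum_le => c; rewrite HP HQ.
  have hc := @cp_ge0 W U PhiUW n HUW c.
  have : Rabs (P1 c + P2 c - (rsum m + M2)) <= Rabs (P1 c - rsum m) + P2 c + M2.
    rewrite (_ : P1 c + P2 c - (rsum m + M2) = (P1 c - rsum m) + (P2 c - M2)); last by ring.
    apply: (Rle_trans _ _ _ (Rabs_triang _ _)).
    have h2 : Rabs (P2 c - M2) <= P2 c + M2.
      apply: (Rle_trans _ _ _ (Rabs_triang _ _)); have h3 := P2ge c; rewrite Rabs_Ropp !Rabs_right; lra.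
    lra.
  move=> h; have := Rmult_le_compat_l _ _ _ hc h; lra.
rewrite !rsum_split EP2 rsum_scal (@cp_sum W U PhiUW n HUW) Rmult_1_r.
have : rsum (fun c => cp c * Rabs (P1 c - rsum m)) <=
       sqrt (rsum (fun wn => rsum (fun un => pU wn un * (f1 tau vn wn un * f1 tau vn wn un)))).
  apply: Rle_trans (jensen (fun c => P1 c - rsum m) (@cp_ge0 W U PhiUW n HUW) (@cp_sum W U PhiUW n HUW)) _.
  apply: sqrt_le_1_alt.
  exact: (@var_bound W U PhiUW n HUW (f1 tau vn)).
lra.
Qed.

Definition Sv b v := rsum (fun w => rsum (fun u => jnt w u v * Rpower (Zr w u v) b)).

Lemma Sv_ge0 b v : 0 <= Sv b v.
Proof.
apply: rsum_ge0 => w; apply: rsum_ge0 => u; apply: Rmult_le_pos; first exact: jnt_ge0.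
apply: Rlt_le; exact: Rpower_pos.
Qed.

Lemma EVsqrtE b : EVsqrt PhiW PhiUW PhiVWU b = rsum (fun v => sqrt (PV v * Sv b v)).
Proof.
apply: rsum_ext => v.
case: (Rle_lt_or_eq_dec _ _ (PV_ge0 v)) => hv; last first.
  by rewrite -hv !Rmult_0_l sqrt_0.
have -> : rsum (fun w => rsum (fun u => jnt w u v / PV v * Rpower (Zr w u v) b)) = / PV v * Sv b v.
  rewrite /Sv -rsum_scal; apply: rsum_ext => w; rewrite -rsum_scal; apply: rsum_ext => u.
  rewrite /Rdiv; ring.
rewrite -{1}(sqrt_square (PV v)); last lra.
rewrite -sqrt_mult_alt; last by apply: Rmult_le_pos; lra.
congr sqrt; field; lra.
Qed.

Lemma EZpowE b : EZpow PhiW PhiUW PhiVWU b =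
  rsum (fun w => rsum (fun u => rsum (fun v => jnt w u v * Rpower (Zr w u v) b))).
Proof. by []. Qed.

Lemma sum_M2 tau b : 0 < tau -> 0 <= b ->
  rsum (fun vn => rsum (fun wn => rsum (fun un => pU wn un * f2 tau vn wn un))) <=
  Rpower tau (- b) * (EZpow PhiW PhiUW PhiVWU b) ^ n.
Proof.
move=> ht hb.
apply: (Rle_trans _ (rsum (fun vn : seqV V n => rsum (fun wn : seqW W n => rsum (fun un : seqU U n =>
   Rpower tau (- b) * rprod (fun t => jnt (wn t) (un t) (vn t) * Rpower (Zr (wn t) (un t) (vn t)) b)))))).
  apply: rsum_le => vn; apply: rsum_le => wn; apply: rsum_le => un.
  apply: Rle_trans (term2 _ _ _ ht hb) _.
  by rewrite rprod_split /Jn; right; ring.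
rewrite (rsum_ext (g := fun vn : seqV V n => Rpower tau (- b) * rsum (fun wn : seqW W n => rsum (fun un : seqU U n =>
   rprod (fun t => jnt (wn t) (un t) (vn t) * Rpower (Zr (wn t) (un t) (vn t)) b))))); last first.
  by move=> vn; rewrite -rsum_scal; apply: rsum_ext => wn; rewrite -rsum_scal.
rewrite rsum_scal; apply: Req_le; congr (_ * _).
rewrite (rsum_exch (fun (vn : seqV V n) (wn : seqW W n) => rsum (fun un : seqU U n =>
   rprod (fun t => jnt (wn t) (un t) (vn t) * Rpower (Zr (wn t) (un t) (vn t)) b)))).
rewrite (rsum_ext (g := fun wn : seqW W n => rsum (fun un : seqU U n => rprod (fun t =>
    rsum (fun v => jnt (wn t) (un t) v * Rpower (Zr (wn t) (un t) v) b))))); last first.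
  move=> wn; rewrite (rsum_exch (fun (vn : seqV V n) (un : seqU U n) =>
   rprod (fun t => jnt (wn t) (un t) (vn t) * Rpower (Zr (wn t) (un t) (vn t)) b))).
  apply: rsum_ext => un.
  exact: (tens1 (fun t v => jnt (wn t) (un t) v * Rpower (Zr (wn t) (un t) v) b)).
rewrite (tens2 (fun t w u => rsum (fun v => jnt w u v * Rpower (Zr w u v) b))).
by rewrite rprod_const.
Qed.

Lemma sum_S1 tau b : 0 < tau -> 0 <= b ->
  rsum (fun vn => sqrt (rsum (fun wn => rsum (fun un => pU wn un * (f1 tau vn wn un * f1 tau vn wn un))))) <=
  sqrt (Rpower tau b) * (EVsqrt PhiW PhiUW PhiVWU (1 - b)) ^ n.
Proof.
move=> ht hb.
apply: (Rle_trans _ (rsum (fun vn : seqV V n =>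
   sqrt (Rpower tau b) * rprod (fun t => sqrt (PV (vn t) * Sv (1 - b) (vn t)))))).
  apply: rsum_le => vn.
  rewrite -sqrt_rprod; last by move=> t; apply: Rmult_le_pos; [exact: PV_ge0|exact: Sv_ge0].
  rewrite -sqrt_mult_alt; last by apply: Rlt_le; exact: Rpower_pos.
  apply: sqrt_le_1_alt.
  apply: (Rle_trans _ (rsum (fun wn : seqW W n => rsum (fun un : seqU U n =>
     Rpower tau b * Qn vn * rprod (fun t => jnt (wn t) (un t) (vn t) * Rpower (Zr (wn t) (un t) (vn t)) (1 - b)))))).
    apply: rsum_le => wn; apply: rsum_le => un.
    apply: Rle_trans (term1 _ _ _ ht hb) _.
    rewrite rprod_split /Jn; right.
    have E : forall x y z w : R, x * y * z * w = w * y * (x * z) by move=> *; ring.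
    exact: E.
  rewrite (rsum_ext (g := fun wn : seqW W n => Rpower tau b * Qn vn * rsum (fun un : seqU U n =>
     rprod (fun t => jnt (wn t) (un t) (vn t) * Rpower (Zr (wn t) (un t) (vn t)) (1 - b))))); last first.
    by move=> wn; rewrite -rsum_scal.
  rewrite rsum_scal.
  rewrite (tens2 (fun t w u => jnt w u (vn t) * Rpower (Zr w u (vn t)) (1 - b))).
  rewrite Rmult_assoc /Qn -rprod_split; right; reflexivity.
rewrite rsum_scal EVsqrtE.
rewrite (tens1 (fun t v => sqrt (PV v * Sv (1 - b) v))).
by rewrite rprod_const; apply: Rle_refl.
Qed.

Lemma main_bound tau b b' : 0 < tau -> 0 <= b -> 0 <= b' ->
  expected_tv PhiW PhiUW PhiVWU n <=
  / 2 * (sqrt (Rpower tau b') * (EVsqrt PhiW PhiUW PhiVWU (1 - b')) ^ n) +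
  Rpower tau (- b) * (EZpow PhiW PhiUW PhiVWU b) ^ n.
Proof.
move=> ht hb hb'.
rewrite /expected_tv /tv_dist.
rewrite (rsum_ext (g := fun c => / 2 * rsum (fun vn => cp c * Rabs (PVn PhiW PhiVWU c vn - QVn PhiW PhiUW PhiVWU vn)))); last first.
  move=> c; rewrite -!rsum_scal; apply: rsum_ext => vn; rewrite /cp /B.cp; ring.
rewrite rsum_scal rsum_exch.
apply: (Rle_trans _ (/ 2 * rsum (fun vn =>
  sqrt (rsum (fun wn => rsum (fun un => pU wn un * (f1 tau vn wn un * f1 tau vn wn un)))) +
  2 * rsum (fun wn => rsum (fun un => pU wn un * f2 tau vn wn un))))).
  apply: Rmult_le_compat_l; first lra.
  apply: rsum_le => vn; exact: Evn.
rewrite rsum_split rsum_scal.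
have h1 := sum_S1 ht hb'.
have h2 := sum_M2 ht hb.
lra.
Qed.
End Main.

End C.
Import C.

Module D.
Set Implicit Arguments.
Unset Strict Implicit.
Local Open Scope R_scope.


Lemma ln2_pos : 0 < ln 2.
Proof. rewrite -ln_1; apply: ln_increasing; lra. Qed.

Lemma exp_upper x : Rabs x <= / 2 -> exp x <= 1 + x + 2 * (x * x).
Proof.
move=> hx.
have hx' : - / 2 <= x <= / 2 by split; [have := Rabs_Ropp x; have := Rle_abs (- x); lra | have := Rle_abs x; lra].
have h1 := exp_ineq1_le (- x).
have e : exp x = / exp (- x) by rewrite exp_Ropp Rinv_inv.
rewrite e.
apply: (Rle_trans _ (/ (1 - x))).
  apply: Rinv_le_contravar; lra.
have hp : 0 < 1 - x by lra.
apply: (Rmult_le_reg_r (1 - x)) => //.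
rewrite Rinv_l; last lra.
nra.
Qed.

Lemma final_alg A B b b' n : 0 < A -> 0 < B -> 0 < 2 * b + b' ->
  sqrt (Rpower (Rpower 2 (2 * (log2 A - log2 B) / (2 * b + b') * INR n)) b') * B ^ n =
  Rpower 2 (- ((- b' / (2 * b + b')) * log2 A + (- b / (2 * b + b')) * log2 (B ^ 2)) * INR n) /\
  Rpower (Rpower 2 (2 * (log2 A - log2 B) / (2 * b + b') * INR n)) (- b) * A ^ n =
  Rpower 2 (- ((- b' / (2 * b + b')) * log2 A + (- b / (2 * b + b')) * log2 (B ^ 2)) * INR n).
Proof.
move=> hA hB hD.
have l2 := ln2_pos.
have LB : log2 (B ^ 2) = 2 * ln B / ln 2 by rewrite /log2 ln_pow //; simpl INR; field; lra.
rewrite LB /log2.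
split.
  rewrite -(@Rpower_pow n B hB) -Rpower_sqrt; last exact: Rpower_pos.
  rewrite /Rpower !ln_exp -exp_plus; congr exp; field; lra.
rewrite -(@Rpower_pow n A hA).
rewrite /Rpower !ln_exp -exp_plus; congr exp; field; lra.
Qed.

Section Final.
Variables (W U V : finType).
Variables (PhiW : W -> R) (PhiUW : W -> U -> R) (PhiVWU : W -> U -> V -> R).
Hypothesis HW : is_pmf PhiW.
Hypothesis HUW : forall w, is_pmf (PhiUW w).
Hypothesis HVWU : forall w u, is_pmf (PhiVWU w u).

Local Notation PV := (PhiV PhiW PhiUW PhiVWU).
Local Notation jnt := (joint PhiW PhiUW PhiVWU).
Local Notation Zr := (Zrv PhiW PhiUW PhiVWU).

Definition S3 (F : W -> U -> V -> R) := rsum (fun w => rsum (fun u => rsum (fun v => F w u v))).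

Lemma S3_add F G : S3 (fun w u v => F w u v + G w u v) = S3 F + S3 G.
Proof.
rewrite /S3 -rsum_split; apply: rsum_ext => w; rewrite -rsum_split; apply: rsum_ext => u.
by rewrite -rsum_split.
Qed.

Lemma S3_scal c F : S3 (fun w u v => c * F w u v) = c * S3 F.
Proof.
rewrite /S3 -rsum_scal; apply: rsum_ext => w; rewrite -rsum_scal; apply: rsum_ext => u.
by rewrite -rsum_scal.
Qed.

Lemma S3_le F G : (forall w u v, F w u v <= G w u v) -> S3 F <= S3 G.
Proof. by move=> H; apply: rsum_le => w; apply: rsum_le => u; apply: rsum_le => v. Qed.

Lemma S3_ext F G : (forall w u v, F w u v = G w u v) -> S3 F = S3 G.
Proof. by move=> H; apply: rsum_ext => w; apply: rsum_ext => u; apply: rsum_ext => v. Qed.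

Lemma S3_W (h : W -> R) : S3 (fun w u v => jnt w u v * h w) = rsum (fun w => PhiW w * h w).
Proof.
apply: rsum_ext => w.
rewrite (rsum_ext (g := fun u => (PhiW w * h w * PhiUW w u) * rsum (fun v => PhiVWU w u v))); last first.
  by move=> u; rewrite -rsum_scal; apply: rsum_ext => v; rewrite /joint; ring.
rewrite (rsum_ext (g := fun u => (PhiW w * h w) * PhiUW w u)); last first.
  by move=> u; rewrite (proj2 (HVWU w u)); ring.
by rewrite rsum_scal (proj2 (HUW w)) Rmult_1_r.
Qed.

Lemma sum_joint : S3 jnt = 1.
Proof.
rewrite (S3_ext (G := fun w u v => jnt w u v * (fun _ => 1) w)); last by move=> *; ring.
by rewrite S3_W (rsum_ext (g := PhiW)) ?(proj2 HW) // => w; ring.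
Qed.

Lemma rsum_nz (T : finType) (f : T -> R) : rsum f <> 0 -> exists i, f i <> 0.
Proof.
move=> H; apply: NNPP => Hn; apply: H.
rewrite /rsum big1 // => i _; apply: NNPP => Hi; apply: Hn; by exists i.
Qed.

Lemma ex_pos : exists w u v, 0 < jnt w u v.
Proof.
have := sum_joint; rewrite /S3 => h.
have [w hw] : exists w, rsum (fun u => rsum (fun v => jnt w u v)) <> 0 by apply: rsum_nz; lra.
have [u hu] := rsum_nz hw.
have [v hv] := rsum_nz hu.
exists w, u, v; have := jnt_ge0 HW HUW HVWU w u v; lra.
Qed.

Lemma EZpow_pos b : 0 < EZpow PhiW PhiUW PhiVWU b.
Proof.
have [w [u [v h]]] := ex_pos.
apply: (Rlt_le_trans _ (jnt w u v * Rpower (Zr w u v) b)).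
  apply: Rmult_lt_0_compat => //; exact: Rpower_pos.
have g0 : forall w u v, 0 <= jnt w u v * Rpower (Zr w u v) b.
  move=> *; apply: Rmult_le_pos; [exact: jnt_ge0| apply: Rlt_le; exact: Rpower_pos].
apply: Rle_trans (@rsum_ge_term _ (fun v => jnt w u v * Rpower (Zr w u v) b) v (g0 w u)) _.
apply: Rle_trans (@rsum_ge_term _ (fun u => rsum (fun v => jnt w u v * Rpower (Zr w u v) b)) u _) _.
  by move=> j; apply: rsum_ge0 => k; exact: g0.
apply: (@rsum_ge_term _ (fun w => rsum (fun u => rsum (fun v => jnt w u v * Rpower (Zr w u v) b))) w).
by move=> j; apply: rsum_ge0 => k; apply: rsum_ge0 => l; exact: g0.
Qed.

Lemma EVsqrt_pos b : 0 < EVsqrt PhiW PhiUW PhiVWU b.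
Proof.
have [w [u [v h]]] := ex_pos.
rewrite (EVsqrtE HW HUW HVWU).
apply: rsum_gt0.
  by move=> j; apply: sqrt_pos.
exists v; apply: sqrt_lt_R0; apply: Rmult_lt_0_compat.
  exact: Rlt_le_trans h (PV_ge HW HUW HVWU _ _ _).
apply: (Rlt_le_trans _ (jnt w u v * Rpower (Zr w u v) b)).
  apply: Rmult_lt_0_compat => //; exact: Rpower_pos.
have g0 : forall w u, 0 <= jnt w u v * Rpower (Zr w u v) b.
  move=> *; apply: Rmult_le_pos; [exact: jnt_ge0| apply: Rlt_le; exact: Rpower_pos].
apply: Rle_trans (@rsum_ge_term _ (fun u => jnt w u v * Rpower (Zr w u v) b) u (g0 w)) _.
apply: (@rsum_ge_term _ (fun w => rsum (fun u => jnt w u v * Rpower (Zr w u v) b)) w).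
by move=> j; apply: rsum_ge0 => k; exact: g0.
Qed.

Lemma S3_ge_term F w u v : (forall w u v, 0 <= F w u v) -> F w u v <= S3 F.
Proof.
move=> g0.
apply: Rle_trans (@rsum_ge_term _ (fun v => F w u v) v (g0 w u)) _.
apply: Rle_trans (@rsum_ge_term _ (fun u => rsum (fun v => F w u v)) u _) _.
  by move=> j; apply: rsum_ge0 => k; exact: g0.
apply: (@rsum_ge_term _ (fun w => rsum (fun u => rsum (fun v => F w u v))) w).
by move=> j; apply: rsum_ge0 => k; apply: rsum_ge0 => l; exact: g0.
Qed.

Definition Lz := S3 (fun w u v => jnt w u v * ln (Zr w u v)).

Lemma Lz_eq : Lz = ln 2 * (mutinfo PhiW PhiUW PhiVWU - entropyW PhiW).
Proof.
have l2 := ln2_pos.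
rewrite /Lz (S3_ext (G := fun w u v => ln 2 * (jnt w u v * log2 (PhiW w)) +
   ln 2 * (jnt w u v * log2 (PhiVWU w u v / PV v)))); last first.
  move=> w u v.
  case: (Rle_lt_or_eq_dec _ _ (jnt_ge0 HW HUW HVWU w u v)) => hj; last by rewrite -hj; ring.
  have h1 := proj1 HW w; have h2 := proj1 (HUW w) u; have h3 := proj1 (HVWU w u) v.
  have pw : 0 < PhiW w.
    case: (Rle_lt_or_eq_dec _ _ h1) => // e; move: hj; rewrite /joint -e; lra.
  have pv : 0 < PhiVWU w u v.
    case: (Rle_lt_or_eq_dec _ _ h3) => // e; move: hj; rewrite /joint -e; lra.
  have pV : 0 < PV v by apply: Rlt_le_trans hj (PV_ge HW HUW HVWU _ _ _).
  have q : 0 < PhiVWU w u v / PV v by apply: Rdiv_lt_0_compat.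
  have -> : Zr w u v = PhiW w * (PhiVWU w u v / PV v) by rewrite /Zrv /Rdiv; ring.
  rewrite ln_mult // /log2; field; lra.
rewrite S3_add !S3_scal.
rewrite (S3_W (fun w => log2 (PhiW w))).
rewrite /entropyW /mutinfo -/(S3 _); ring.
Qed.

Lemma ex_small : Lz < 0 -> exists b, 0 < b /\ EZpow PhiW PhiUW PhiVWU b < 1.
Proof.
move=> hL.
set K := 1 + S3 (fun w u v => Rabs (ln (Zr w u v))).
have K0 : 0 <= S3 (fun w u v => Rabs (ln (Zr w u v))).
  apply: rsum_ge0 => w; apply: rsum_ge0 => u; apply: rsum_ge0 => v; exact: Rabs_pos.
have K1 : 1 <= K by rewrite /K; lra.
have hK : forall w u v, Rabs (ln (Zr w u v)) <= K.
  move=> w u v; have := @S3_ge_term (fun w u v => Rabs (ln (Zr w u v))) w u v (fun _ _ _ => Rabs_pos _).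
  rewrite /K; lra.
set b := Rmin (/ (2 * K)) (- Lz / (4 * (K * K))).
have KK : 0 < K * K by nra.
have hb0 : 0 < b.
  apply: Rmin_glb_lt; first by apply: Rinv_0_lt_compat; lra.
  apply: Rdiv_lt_0_compat; lra.
have hb1 : b * K <= / 2.
  have := Rmin_l (/ (2 * K)) (- Lz / (4 * (K * K))); rewrite -/b => h.
  have : / (2 * K) * K = / 2 by field; lra.
  have : b * K <= / (2 * K) * K by apply: Rmult_le_compat_r; lra.
  lra.
have hb2 : 2 * (b * b * (K * K)) <= - b * Lz / 2.
  have := Rmin_r (/ (2 * K)) (- Lz / (4 * (K * K))); rewrite -/b => h.
  have : b * (K * K) <= - Lz / (4 * (K * K)) * (K * K) by apply: Rmult_le_compat_r; lra.
  have -> : - Lz / (4 * (K * K)) * (K * K) = - Lz / 4 by field; lra.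
  nra.
exists b; split => //.
have T : forall w u v, jnt w u v * Rpower (Zr w u v) b <=
   jnt w u v + b * (jnt w u v * ln (Zr w u v)) + (2 * (b * b * (K * K))) * jnt w u v.
  move=> w u v.
  have j0 := jnt_ge0 HW HUW HVWU w u v.
  set x := ln (Zr w u v).
  have hx := hK w u v; rewrite -/x in hx.
  have ax : Rabs (b * x) <= / 2.
    rewrite Rabs_mult Rabs_right; last lra.
    apply: Rle_trans hb1; apply: Rmult_le_compat_l; lra.
  have e := exp_upper ax.
  have xx : x * x <= K * K.
    have a0 := Rabs_pos x.
    have : Rabs x * Rabs x <= K * K by apply: Rmult_le_compat.
    rewrite -Rabs_mult Rabs_right //; apply: Rle_ge; exact: Rle_0_sqr.
  have e2 : Rpower (Zr w u v) b <= 1 + b * x + 2 * (b * b * (K * K)).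
    rewrite /Rpower -/x.
    apply: Rle_trans e _.
    have : b * x * (b * x) <= b * b * (K * K).
      have -> : b * x * (b * x) = (b * b) * (x * x) by ring.
      apply: Rmult_le_compat_l => //; nra.
    lra.
  have := Rmult_le_compat_l _ _ _ j0 e2; lra.
have := S3_le T.
rewrite S3_add S3_add S3_scal S3_scal sum_joint -/Lz => h.
change (S3 (fun w u v => jnt w u v * Rpower (Zr w u v) b) < 1).
have : b * Lz < 0 by nra.
lra.
Qed.
End Final.

End D.
Import D.


Lemma EVsqrt0 (W U V : finType)
  (PhiW : W -> R) (PhiUW : W -> U -> R) (PhiVWU : W -> U -> V -> R) :
  is_pmf PhiW -> (forall w, is_pmf (PhiUW w)) -> (forall w u, is_pmf (PhiVWU w u)) ->
  EVsqrt PhiW PhiUW PhiVWU 0 = 1.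
Proof.
move=> HW HUW HVWU.
rewrite (EVsqrtE HW HUW HVWU).
rewrite (rsum_ext (g := PhiV PhiW PhiUW PhiVWU)); last first.
  move=> v.
  rewrite (_ : Sv PhiW PhiUW PhiVWU 0 v = PhiV PhiW PhiUW PhiVWU v).
    apply: sqrt_square; exact: (PV_ge0 HW HUW HVWU).
  rewrite /Sv /PhiV; apply: rsum_ext => w; apply: rsum_ext => u.
  by rewrite /Rpower Rmult_0_l exp_0 Rmult_1_r.
rewrite /PhiV rsum_exch.
rewrite -(sum_joint HW HUW HVWU); apply: rsum_ext => w.
by rewrite rsum_exch.
Qed.

Theorem mainTheorem17 (W U V : finType)
  (PhiW : W -> R) (PhiUW : W -> U -> R) (PhiVWU : W -> U -> V -> R) :
  is_pmf PhiW ->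
  (forall w, is_pmf (PhiUW w)) ->
  (forall w u, is_pmf (PhiVWU w u)) ->
  entropyW PhiW > mutinfo PhiW PhiUW PhiVWU ->
  (exists b b' : R, 0 <= b /\ 0 <= b' /\ (b <> 0 \/ b' <> 0) /\
     0 < gamma_exp PhiW PhiUW PhiVWU b b') /\
  (forall b b' : R, 0 <= b -> 0 <= b' -> (b <> 0 \/ b' <> 0) ->
   forall n : nat,
     expected_tv PhiW PhiUW PhiVWU n
       <= 3 / 2 * Rpower 2 (- gamma_exp PhiW PhiUW PhiVWU b b' * INR n)).
Proof.
move=> HW HUW HVWU Hgt.
have l2 := ln2_pos.
split.
  have hL : Lz PhiW PhiUW PhiVWU < 0.
    rewrite (Lz_eq HW HUW HVWU).
    have : mutinfo PhiW PhiUW PhiVWU - entropyW PhiW < 0 by lra.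
    nra.
  have [b [hb hA]] := ex_small HW HUW HVWU hL.
  exists b, 1; split; first lra; split; first lra; split; first by right; lra.
  rewrite /gamma_exp (_ : 1 - 1 = 0); last ring.
  rewrite (@EVsqrt0 _ _ _ _ _ _ HW HUW HVWU) pow1 /log2 ln_1.
  have hA0 := EZpow_pos HW HUW HVWU b.
  have : ln (EZpow PhiW PhiUW PhiVWU b) < 0 by rewrite -ln_1; apply: ln_increasing.
  move=> h.
  have hq : ln (EZpow PhiW PhiUW PhiVWU b) / ln 2 < 0.
    by apply: Rmult_neg_pos => //; apply: Rinv_0_lt_compat.
  have -> : - (1) / (2 * b + 1) * (ln (EZpow PhiW PhiUW PhiVWU b) / ln 2) + - b / (2 * b + 1) * (0 / ln 2)
    = - (ln (EZpow PhiW PhiUW PhiVWU b) / ln 2) / (2 * b + 1) by field; lra.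
  apply: Rdiv_lt_0_compat; lra.
move=> b b' hb hb' hnz n.
have hD : 0 < 2 * b + b'.
  case: hnz => h.
    case: (Rle_lt_or_eq_dec _ _ hb) => e; [lra | by case: h].
  case: (Rle_lt_or_eq_dec _ _ hb') => e; [lra | by case: h].
have [e1 e2] := final_alg n (EZpow_pos HW HUW HVWU b) (EVsqrt_pos HW HUW HVWU (1 - b')) hD.
have ht := Rpower_pos 2 (2 * (log2 (EZpow PhiW PhiUW PhiVWU b) - log2 (EVsqrt PhiW PhiUW PhiVWU (1 - b'))) / (2 * b + b') * INR n).
have := @main_bound _ _ _ _ _ _ n HW HUW HVWU _ _ _ ht hb hb'.
rewrite e1 e2 /gamma_exp.
lra.
Qed.
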